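(* There exists a Lipschitz function $f:[-1,1]\to\mathbb{R}$ (i.e. $|f(x)-f(y)|\le \kappa|x-y|$ for some constant $\kappa$ and all $x,y\in[-1,1]$) such that \[ \limsup_{n\to\infty}\frac{n}{\log n}\,\|B_n(f)-f\|_\infty>0, \] where $\|g\|_\infty=\sup_{x\in[-1,1]}|g(x)|$.
   Context: For $n\ge 1$ the equally spaced nodes are $x_{k,n}:=2k/n-1$, $k=0,\dots,n$. Berrut's barycentric interpolant of $f:[-1,1]\to\mathbb{R}$ is \[ B_n(f,x):=\frac{N_n(f,x)}{D_n(x)}\ \text{ for } x\notin\{x_{0,n},\dots,x_{n,n}\},\qquad B_n(f,x_{k,n}):=f(x_{k,n}), \] where $N_n(f,x)=\sum_{k=0}^n(-1)^k\frac{f(x_{k,n})}{x-x_{k,n}}$ and $D_n(x)=\sum_{k=0}^n(-1)^k\frac{1}{x-x_{k,n}}$. $B_n(f)$ denotes the function $x\mapsto B_n(f,x)$ on $[-1,1]$. *)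

(* Defs.v *)
From HB Require Import structures.
From mathcomp Require Import all_boot all_order all_algebra.
From mathcomp Require Import all_classical all_reals all_analysis.
Set Implicit Arguments. Unset Strict Implicit. Unset Printing Implicit Defensive.
Import Order.TTheory GRing.Theory Num.Theory.
Local Open Scope ring_scope.

Section Berrut.
Variable R : realType.

Definition node (n k : nat) : R := 2 * k%:R / n%:R - 1.

Definition berrutN (f : R -> R) (n : nat) (x : R) : R :=
  \sum_(k < n.+1) (-1) ^+ k * f (node n k) / (x - node n k).

Definition berrutD (n : nat) (x : R) : R :=
  \sum_(k < n.+1) (-1) ^+ k / (x - node n k).

Definition berrut (f : R -> R) (n : nat) (x : R) : R :=
  if [exists k : 'I_n.+1, x == node n k] then f x
  else berrutN f n x / berrutD n x.

Definition supnorm (g : R -> R) : \bar R :=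
  ereal_sup [set (`|g x|)%:E | x in [set x : R | -1 <= x <= 1]].

Definition lipschitz_on_I (f : R -> R) : Prop :=
  exists kappa : R, forall x y : R, -1 <= x <= 1 -> -1 <= y <= 1 ->
    `|f x - f y| <= kappa * `|x - y|.

End Berrut.

(* Main.v *)
Require Import Defs.
From HB Require Import structures.
From mathcomp Require Import all_boot all_order all_algebra.
From mathcomp Require Import all_classical all_reals all_analysis.
From mathcomp Require Import ring lra zify.
Import Order.TTheory GRing.Theory Num.Theory.
Local Open Scope ring_scope.

Lemma alt_var {R : realType} (phi : nat -> R) (M d : R) N :
  0 <= M -> 0 <= d ->
  (forall i, (i < N)%N -> `|phi i| <= M) ->
  (forall i, (i.+1 < N)%N -> `|phi i.+1 - phi i| <= d) ->
  `|\sum_(0 <= i < N) (-1)^+i * phi i| <= M + N%:R * d.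
Proof.
move=> M0 d0 hM hd.
have claim : forall k, (k < N)%N ->
  `|2 * \sum_(0 <= i < k.+1) (-1)^+i * phi i - (-1)^+k * phi k| <= M + k%:R * d.
  elim=> [|k IH] hk.
    rewrite big_nat1 expr0 !mul1r.
    have -> : 2 * phi 0 - phi 0 = phi 0 by ring.
    by rewrite mul0r addr0; apply: hM.
  have IH' := IH (ltnW hk).
  have e : 2 * \sum_(0 <= i < k.+2) (-1)^+i * phi i - (-1)^+k.+1 * phi k.+1
     = (2 * \sum_(0 <= i < k.+1) (-1)^+i * phi i - (-1)^+k * phi k)
       + (-1)^+k * (phi k - phi k.+1).
    rewrite big_nat_recr //= exprS; ring.
  rewrite e; apply: (le_trans (ler_normD _ _)).
  rewrite normrM normrX normrN1 expr1n mul1r [`|phi k - _|]distrC -natr1.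
  have := hd k hk; lra.
case: N hM hd claim => [|N] hM hd claim.
  by rewrite big_geq // normr0 mul0r addr0.
have := claim N (ltnSn N).
have hp := hM N (ltnSn N).
set S := \sum_(0 <= i < N.+1) _.
move=> h.
have h2 : `|2 * S| <= M + N%:R * d + M.
  have -> : 2 * S = (2 * S - (-1)^+N * phi N) + (-1)^+N * phi N by ring.
  apply: (le_trans (ler_normD _ _)); rewrite normrM normrX normrN1 expr1n mul1r.
  by apply: lerD.
rewrite normrM ger0_norm // in h2.
have hN : 0 <= N%:R * d :> R by rewrite mulr_ge0.
rewrite -natr1. lra.
Qed.

Lemma alt_mono {R : realType} N (a : nat -> R) :
  (forall i, 0 <= a i) -> (forall i, a i.+1 <= a i) ->
  0 <= \sum_(0 <= i < N) (-1)^+i * a i <= a 0%N.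
Proof.
elim: N a => [|N IH] a a0 am.
  by rewrite big_geq // lexx a0.
rewrite big_nat_recl //.
have := IH (fun i => a i.+1) (fun i => a0 i.+1) (fun i => am i.+1).
under eq_bigr do rewrite exprS mulN1r mulNr.
rewrite sumrN expr0 mul1r.
have := am 0%N; have := a0 1%N.
move=> h1 h2 /andP[h3 h4]; apply/andP; split; lra.
Qed.

Lemma alt_mono2 {R : realType} N (a : nat -> R) :
  (forall i, 0 <= a i) -> (forall i, a i.+1 <= a i) ->
  a 0%N - a 1%N <= \sum_(0 <= i < N.+2) (-1)^+i * a i.
Proof.
move=> a0 am.
rewrite big_nat_recl //.
have := alt_mono N.+1 (fun i => a i.+1) (fun i => a0 i.+1) (fun i => am i.+1).
under eq_bigr do rewrite exprS mulN1r mulNr.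
rewrite sumrN expr0 mul1r.
move=> /andP[h3 h4]; lra.
Qed.

Local Open Scope classical_set_scope.

Definition PP (m : nat) : nat := 2 ^ m.
Definition KK (m : nat) : nat := 1024 * (PP m * PP m).
Definition CC (m : nat) : nat := 8 * (KK m + m + 4).
Definition LL (m : nat) : nat := 2 ^ CC m.
Definition NN (m : nat) : nat := 16 * PP m * LL m.

Definition ip {R : realType} (m : nat) : R := (PP m)%:R^-1.
Definition ss {R : realType} (m : nat) : R := 1 - ip m.
Definition len {R : realType} (m : nat) : R := ip m / 4.
Definition hh {R : realType} (m : nat) : R := ip m / (8 * (LL m)%:R).

Definition EE {R : realType} (t : R) : Prop :=
  (forall m, ~ (ss m < t < ss m + len m)) \/
  (exists m i, (i <= LL m)%N /\ t = ss m + 2 * i%:R * hh m).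

Definition ff {R : realType} (t : R) : R := inf [set `|t - e| | e in @EE R].

Lemma EEm1 {R : realType} : @EE R (-1).
Proof.
left=> m /andP[h _]; move: h; rewrite /ss.
have : ip m <= 1 :> R by rewrite /ip invf_le1 ?ltr0n ?ler1n /PP expn_gt0.
lra.
Qed.

Lemma ff_le {R : realType} (t e : R) : EE e -> ff t <= `|t - e|.
Proof.
move=> He; rewrite /ff; apply: ge_inf; last by exists e.
by exists 0 => _ [e' _ <-].
Qed.

Lemma ff_ge {R : realType} (t c : R) : (forall e, EE e -> c <= `|t - e|) -> c <= ff t.
Proof.
move=> H; apply: lb_le_inf; first by exists `|t - (-1)|, (-1); [exact: EEm1|].
by move=> _ [e He <-]; apply: H.
Qed.

Lemma ff_ge0 {R : realType} (t : R) : 0 <= ff t.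
Proof. by apply: ff_ge => e _. Qed.

Lemma ff0 {R : realType} (t : R) : EE t -> ff t = 0.
Proof.
move=> Ht; apply/le_anti; rewrite ff_ge0 andbT.
by have := ff_le t t Ht; rewrite subrr normr0.
Qed.

Lemma ff_lip {R : realType} (x y : R) : `|ff x - ff y| <= `|x - y|.
Proof.
have key : forall a b : R, ff a - `|a - b| <= ff b.
  move=> a b; apply: ff_ge => e He.
  rewrite lerBlDr addrC; apply: le_trans (ff_le a e He) _.
  have -> : a - e = (a - b) + (b - e) by ring.
  exact: ler_normD.
rewrite ler_norml; have := key x y; have := key y x; rewrite distrC; lra.
Qed.

Local Close Scope classical_set_scope.

Lemma PP_gt0 m : (0 < PP m)%N. Proof. by rewrite /PP expn_gt0. Qed.
Lemma LL_gt0 m : (0 < LL m)%N. Proof. by rewrite /LL expn_gt0. Qed.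

Lemma ip_gt0 {R : realType} m : 0 < @ip R m.
Proof. by rewrite /ip invr_gt0 ltr0n PP_gt0. Qed.
Lemma ip_le1 {R : realType} m : @ip R m <= 1.
Proof. by rewrite /ip invf_le1 ?ltr0n ?ler1n PP_gt0. Qed.
Lemma ip_lt {R : realType} m m' : (m' < m)%N -> 2 * @ip R m <= ip m'.
Proof.
move=> hm; rewrite /ip.
have h : (2 * PP m' <= PP m)%N by rewrite /PP -expnS leq_exp2l.
have p0 : 0 < (PP m')%:R :> R by rewrite ltr0n PP_gt0.
have : 2 * (PP m')%:R <= (PP m)%:R :> R by rewrite -natrM ler_nat.
move=> h2.
have -> : 2 * (PP m)%:R^-1 = ((PP m)%:R / 2)^-1 :> R.
  by field; rewrite pnatr_eq0 -lt0n PP_gt0.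
rewrite lef_pV2 ?posrE //; first lra.
by rewrite divr_gt0 // ltr0n PP_gt0.
Qed.
Lemma hh_gt0 {R : realType} m : 0 < @hh R m.
Proof. by rewrite /hh divr_gt0 ?ip_gt0 // mulr_gt0 // ltr0n LL_gt0. Qed.
Lemma hhL {R : realType} m : (LL m)%:R * @hh R m = ip m / 8.
Proof. by rewrite /hh; field; rewrite pnatr_eq0 -lt0n LL_gt0. Qed.
Lemma hh_le {R : realType} m : @hh R m <= ip m / 8.
Proof.
rewrite -hhL; have := hh_gt0 m (R:=R).
have : 1 <= (LL m)%:R :> R by rewrite ler1n LL_gt0.
nra.
Qed.
Lemma NNh {R : realType} m : (NN m)%:R * @hh R m = 2.
Proof.
rewrite /hh /ip /NN !natrM; field.
by rewrite !pnatr_eq0 -!lt0n LL_gt0 PP_gt0.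
Qed.
Lemma nodeE {R : realType} m k : node R (NN m) k = k%:R * hh m - 1.
Proof.
rewrite /node; have := NNh m (R:=R).
have n0 : (NN m)%:R != 0 :> R by rewrite pnatr_eq0 /NN -lt0n !muln_gt0 LL_gt0 PP_gt0.
move=> h; have -> : hh m = 2 / (NN m)%:R :> R.
  by rewrite -h; field.
by field.
Qed.

Lemma sep_lt {R : realType} m m' : (m' < m)%N -> @ss R m' + len m' <= ss m - ip m / 2.
Proof. move=> h; have := ip_lt (R:=R) _ _ h; rewrite /ss /len; lra. Qed.

Lemma sep_gt {R : realType} m m' : (m < m')%N -> @ss R m + len m <= ss m'.
Proof. move=> h; have := ip_lt (R:=R) _ _ h; have := ip_gt0 m' (R:=R); rewrite /ss /len; lra. Qed.

Lemma EE_gap {R : realType} m (y : R) : ss m - ip m / 2 <= y < ss m -> EE y.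
Proof.
move=> /andP[h1 h2]; left=> m' /andP[h3 h4].
case: (ltngtP m' m) => hm.
- have := sep_lt (R:=R) _ _ hm; lra.
- have := sep_gt (R:=R) _ _ hm; have := ip_gt0 m (R:=R); rewrite /len; lra.
- by subst m'; lra.
Qed.

Lemma EE_even {R : realType} m i : (i <= LL m)%N -> @EE R (ss m + 2 * i%:R * hh m).
Proof. by move=> hi; right; exists m, i. Qed.

Lemma ff_odd {R : realType} m i : (i < LL m)%N ->
  hh m <= ff (ss m + (2 * i%:R + 1) * @hh R m).
Proof.
move=> hi; apply: ff_ge => e [He|[m' [i' [hi' ->]]]].
- have /negP := He m; rewrite negb_and -!leNgt => /orP[] he.
  + have : 0 <= i%:R :> R by [].
    have := hh_gt0 m (R:=R); rewrite ler_normr => h0 hi0.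
    apply/orP; left; nra.
  + have hL : (i.+1 <= LL m)%N by [].
    have : (i%:R + 1 <= (LL m)%:R :> R) by rewrite natr1 ler_nat.
    have := hhL m (R:=R); have := hh_gt0 m (R:=R); rewrite /len ler_normr => h0 h1 h2.
    have h3 : (i%:R + 1) * hh m <= (LL m)%:R * hh m :> R by rewrite ler_wpM2r // ltW.
    rewrite /len in he; apply/orP; right; lra.
- have h0 := hh_gt0 m (R:=R).
  case: (ltngtP m' m) => hm.
  + have := sep_lt (R:=R) _ _ hm.
    have : (i'%:R <= (LL m')%:R :> R) by rewrite ler_nat.
    have := hhL m' (R:=R); have := hh_gt0 m' (R:=R); have := ip_gt0 m (R:=R).
    have : 0 <= i%:R :> R by [].
    rewrite /len ler_normr => h1 h2 h3 h4 h5 h6.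
    apply/orP; left; nra.
  + have := sep_gt (R:=R) _ _ hm.
    have : (i%:R + 1 <= (LL m)%:R :> R) by rewrite natr1 ler_nat.
    have := hhL m (R:=R); have : 0 <= i'%:R :> R by []; have := hh_gt0 m' (R:=R).
    rewrite /len ler_normr => h1 h2 h3 h4 h5.
    apply/orP; right; nra.
  + subst m'; rewrite ler_normr.
    case: (leqP i' i) => hii.
    * have : i'%:R <= i%:R :> R by rewrite ler_nat.
      move=> h1; apply/orP; left; nra.
    * have : i%:R + 1 <= i'%:R :> R by rewrite natr1 ler_nat.
      move=> h1; apply/orP; right; nra.
Qed.

Lemma diffb {R : realType} (A B u v g d : R) : 0 < g -> g <= `|u| -> g <= `|v| ->
  `|A - B| <= d -> `|u - v| <= d -> `|B| <= 2 ->
  `|A / u - B / v| <= d / g + 2 * d / g ^+ 2.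
Proof.
move=> g0 gu gv hAB huv hB.
have u0 : u != 0 by rewrite -normr_gt0; apply: lt_le_trans gu.
have v0 : v != 0 by rewrite -normr_gt0; apply: lt_le_trans gv.
have -> : A / u - B / v = (A - B) / u + B * (v - u) / (u * v) by field; apply/andP.
have hd : 0 <= d by apply: le_trans huv.
apply: (le_trans (ler_normD _ _)); apply: lerD.
  rewrite normrM normfV ler_pdivrMr ?normr_gt0 //.
  have : d / g * g <= d / g * `|u|.
    by rewrite ler_wpM2l // divr_ge0 // ltW.
  by rewrite divfK ?gt_eqF //; apply: le_trans.
rewrite normrM normfV normrM normrM ler_pdivrMr ?mulr_gt0 ?normr_gt0 //.
have e1 : `|v - u| <= d by rewrite distrC.
have : `|B| * `|v - u| <= 2 * d by apply: ler_pM.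
have : g * g <= `|u| * `|v| by apply: ler_pM => //; apply: ltW.
move=> h1 h2; apply: (le_trans h2).
have e2 : 2 * d = 2 * d / g ^+ 2 * (g * g) by field; rewrite gt_eqF.
rewrite {1}e2; apply: ler_wpM2l => //.
apply: divr_ge0; [by rewrite mulr_ge0 | by rewrite exprn_ge0 // ltW].
Qed.

Lemma ff_bound2 {R : realType} m k : (k <= NN m)%N -> `|ff (node R (NN m) k)| <= 2.
Proof.
move=> hk; have hl := ff_lip (node R (NN m) k) (-1).
rewrite (ff0 (R:=R) (-1) EEm1) subr0 nodeE in hl *.
have := NNh m (R:=R); have := hh_gt0 m (R:=R).
have : k%:R <= (NN m)%:R :> R by rewrite ler_nat.
have : 0 <= k%:R :> R by [].
move=> h1 h2 h3 h4.
have e : k%:R * hh m - 1 - -1 = k%:R * hh m :> R by ring.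
have kh0 : 0 <= k%:R * hh m :> R by apply: mulr_ge0 => //; apply: ltW.
rewrite e (ger0_norm (ff_ge0 _)) (ger0_norm kh0) in hl.
rewrite (ger0_norm (ff_ge0 _)).
have : k%:R * hh m <= (NN m)%:R * hh m :> R by rewrite ler_wpM2r // ltW.
lra.
Qed.

Lemma far {R : realType} m (x g : R) k0 N : 0 < g -> (k0 + N <= (NN m).+1)%N ->
  (forall i, (i < N)%N -> g <= `|x - node R (NN m) (k0 + i)|) ->
  `|\sum_(0 <= i < N) (-1)^+i * (ff (node R (NN m) (k0 + i)) / (x - node R (NN m) (k0 + i)))|
    <= 2 / g + (3 / g + 6 / g ^+ 2).
Proof.
move=> g0 hN hg.
have h0 := hh_gt0 m (R:=R).
have hle := hh_le m (R:=R); have := ip_le1 m (R:=R) => hip.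
apply: le_trans (alt_var _ (2 / g) (hh m / g + 2 * hh m / g ^+ 2) N _ _ _ _) _.
- by rewrite divr_ge0 ?ltW.
- have g2 : 0 < g ^+ 2 by rewrite exprn_gt0.
  have t1 : 0 <= hh m / g by apply: divr_ge0; apply: ltW.
  have t2 : 0 <= 2 * hh m / g ^+ 2 by apply: divr_ge0; [apply: mulr_ge0 => //; apply: ltW | apply: ltW].
  lra.
- move=> i hi; rewrite normrM normfV ler_pdivrMr; last first.
    by apply: lt_le_trans (hg i hi).
  apply: (le_trans (ff_bound2 (R:=R) m (k0 + i) _)); first lia.
  have := hg i hi; rewrite -(ler_pM2l (x := 2 / g)) ?divr_gt0 // divfK ?gt_eqF //.
- move=> i hi; apply: diffb => //.
  + exact: hg.
  + by apply: hg; lia.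
  + apply: le_trans (ff_lip _ _) _; rewrite !nodeE addnS -natr1.
    have -> : ((k0 + i)%:R + 1) * hh m - 1 - ((k0 + i)%:R * hh m - 1) = hh m :> R by ring.
    by rewrite ger0_norm // ltW.
  + rewrite !nodeE addnS -natr1.
    have -> : x - (((k0 + i)%:R + 1) * hh m - 1) - (x - ((k0 + i)%:R * hh m - 1)) = - hh m :> R by ring.
    by rewrite normrN ger0_norm // ltW.
  + by apply: ff_bound2; lia.
- have Nh : N%:R * hh m <= 3 :> R.
    have : N%:R <= (NN m)%:R + 1 :> R by rewrite natr1 ler_nat; lia.
    have := NNh m (R:=R); nra.
  have c0 : 0 <= g^-1 + 2 * (g ^+ 2)^-1.
    by apply: addr_ge0; [|apply: mulr_ge0 => //]; rewrite invr_ge0 ?exprn_ge0 // ltW.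
  have -> : N%:R * (hh m / g + 2 * hh m / g ^+ 2) = (N%:R * hh m) * (g^-1 + 2 * (g ^+ 2)^-1) by ring.
  have -> : 3 / g + 6 / g ^+ 2 = 3 * (g^-1 + 2 * (g ^+ 2)^-1) by ring.
  by rewrite lerD2l ler_wpM2r.
Qed.

Definition jj (m : nat) : nat := NN m - 8 * LL m.
Definition aa (m : nat) : nat := NN m - 12 * LL m.
Definition rr (m : nat) : nat := NN m - 6 * LL m.
Definition xx {R : realType} (m : nat) : R := ss m - hh m / 2.

Lemma NN_ge m : (16 * LL m <= NN m)%N.
Proof. have := PP_gt0 m; rewrite /NN; nia. Qed.

Lemma jjE {R : realType} m : (jj m)%:R * @hh R m = 2 - ip m.
Proof.
rewrite /jj natrB; last by have := NN_ge m; lia.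
by rewrite mulrBl NNh natrM -mulrA hhL; field.
Qed.
Lemma aaE {R : realType} m : (aa m)%:R * @hh R m = 2 - 3 * ip m / 2.
Proof.
rewrite /aa natrB; last by have := NN_ge m; lia.
by rewrite mulrBl NNh natrM -mulrA hhL; field.
Qed.
Lemma rrE {R : realType} m : (rr m)%:R * @hh R m = 2 - 3 * ip m / 4.
Proof.
rewrite /rr natrB; last by have := NN_ge m; lia.
by rewrite mulrBl NNh natrM -mulrA hhL; field.
Qed.

Lemma sgn_rev {R : realType} q k : (k < 2 * q)%N -> (-1)^+(2 * q - k.+1) = - (-1)^+k :> R.
Proof.
move=> hk; rewrite -signr_odd oddB // oddM /=.
rewrite -[in RHS]signr_odd; case: (odd k) => /=; rewrite ?expr0 ?expr1 ?opprK //.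
Qed.

Lemma sgn_add {R : realType} q k : (-1)^+(k + 2 * q) = (-1)^+k :> R.
Proof. by rewrite -signr_odd oddD oddM /= addbF signr_odd. Qed.

Lemma jj_even m : jj m = (2 * (8 * PP m * LL m - 4 * LL m))%N.
Proof. rewrite /jj /NN; lia. Qed.
Lemma rr_even m : rr m = (2 * (8 * PP m * LL m - 3 * LL m))%N.
Proof. rewrite /rr /NN; lia. Qed.

Lemma alt_bounds {R : realType} N (a : nat -> R) : (2 <= N)%N ->
  (forall i, 0 <= a i) -> (forall i, a i.+1 <= a i) ->
  a 0%N - a 1%N <= \sum_(0 <= i < N) (-1)^+i * a i <= a 0%N.
Proof.
case: N => [|[|N]] // _ h1 h2.
have := alt_mono N.+2 a h1 h2; have := alt_mono2 N a h1 h2.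
move=> h /andP[_ h']; by rewrite h h'.
Qed.

Definition aseq {R : realType} m (i : nat) : R := ((i%:R + 2^-1) * hh m)^-1.

Lemma aseq_pos {R : realType} m i : 0 < @aseq R m i.
Proof.
rewrite /aseq invr_gt0 mulr_gt0 ?hh_gt0 //.
Qed.

Lemma aseq_dec {R : realType} m i : @aseq R m i.+1 <= aseq m i.
Proof.
have h1 := aseq_pos m i (R:=R); have h2 := aseq_pos m i.+1 (R:=R).
rewrite /aseq in h1 h2 *; rewrite invr_gt0 in h1; rewrite invr_gt0 in h2.
rewrite lef_pV2 ?posrE //.
rewrite ler_wpM2r ?ltW ?hh_gt0 // -natr1; lra.
Qed.

Lemma D_split {R : realType} m :
  berrutD (NN m) (xx m : R) =
  - (\sum_(0 <= i < jj m) (-1)^+i * aseq m i)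
  - (\sum_(0 <= i < (NN m).+1 - jj m) (-1)^+i * aseq m i).
Proof.
have hj : (jj m <= (NN m).+1)%N by rewrite /jj; lia.
have -> : berrutD (NN m) (xx m : R) = \sum_(0 <= k < (NN m).+1) (-1)^+k / (xx m - node R (NN m) k) by rewrite big_mkord.
rewrite (big_cat_nat _ (n := jj m)) //=.
congr (_ + _).
  rewrite big_nat_rev /= -sumrN; apply: eq_big_nat => i /andP[_ hi].
  have e : xx m - node R (NN m) (jj m - i.+1) = (i%:R + 2^-1) * hh m.
    rewrite nodeE natrB // mulrBl jjE /xx /ss -[(i.+1)%:R]natr1; by field.
  rewrite e {1}jj_even sgn_rev -?jj_even // /aseq.
  by rewrite mulNr.
rewrite -{1}[jj m]add0n big_addn -sumrN; apply: eq_big_nat => i /andP[_ hi].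
have e : xx m - node R (NN m) (i + jj m) = - ((i%:R + 2^-1) * hh m).
  rewrite nodeE natrD mulrDl jjE /xx /ss; by field.
rewrite e jj_even sgn_add /aseq.
by rewrite invrN mulrN.
Qed.

Lemma aseq0 {R : realType} m : @aseq R m 0 = (NN m)%:R.
Proof.
have := NNh m (R:=R); have := hh_gt0 m (R:=R); rewrite /aseq => h0 e.
have -> : (NN m)%:R = 2 / hh m :> R by rewrite -e; field; rewrite gt_eqF.
by field; rewrite gt_eqF.
Qed.

Lemma aseq1 {R : realType} m : @aseq R m 1 = (NN m)%:R / 3.
Proof.
have := NNh m (R:=R); have := hh_gt0 m (R:=R); rewrite /aseq => h0 e.
have -> : (NN m)%:R = 2 / hh m :> R by rewrite -e; field; rewrite gt_eqF.
by field; rewrite gt_eqF.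
Qed.

Lemma D_bounds {R : realType} m :
  - (2 * (NN m)%:R) <= berrutD (NN m) (xx m : R) < 0.
Proof.
rewrite D_split.
have hL := LL_gt0 m; have hP := PP_gt0 m.
have h1 : (2 <= jj m)%N by rewrite /jj /NN; nia.
have h2 : (2 <= (NN m).+1 - jj m)%N by rewrite /jj /NN; nia.
have p0 : forall i, 0 <= @aseq R m i by move=> i; apply: ltW; apply: aseq_pos.
have d0 : forall i, @aseq R m i.+1 <= aseq m i by move=> i; apply: aseq_dec.
have := alt_bounds (jj m) (aseq m) h1 p0 d0.
have := alt_bounds ((NN m).+1 - jj m) (aseq m) h2 p0 d0.
rewrite aseq0 aseq1.
have : 0 < (NN m)%:R :> R by rewrite ltr0n /NN; nia.
lra.
Qed.

Lemma region_lb {R : realType} m T : (T <= LL m)%N ->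
  \sum_(0 <= t < T) (2 * (t%:R + 1))^-1 <=
  \sum_(0 <= i < (2 * T)%N) (-1)^+(i + jj m) *
     (ff (node R (NN m) (i + jj m)) / (xx m - node R (NN m) (i + jj m))).
Proof.
have h0 := hh_gt0 m (R:=R).
have nE : forall i, node R (NN m) (i + jj m) = ss m + i%:R * hh m.
  by move=> i; rewrite nodeE natrD mulrDl jjE /ss; ring.
have xE : forall i, xx m - node R (NN m) (i + jj m) = - ((i%:R + 2^-1) * hh m).
  by move=> i; rewrite nE /xx; field.
elim: T => [|T IH] hT; first by rewrite !big_geq.
rewrite big_nat_recr //= (_ : (2 * T.+1 = (2 * T).+2)%N); last by lia.
rewrite big_nat_recr //= big_nat_recr //=.
have IH' := IH (ltnW hT).
rewrite !jj_even !sgn_add -!jj_even !xE.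
have e0 : ff (node R (NN m) ((2 * T)%N + jj m)) = 0.
  by rewrite nE natrM; apply: ff0; apply: EE_even; apply: ltnW.
have e1 : hh m <= ff (node R (NN m) ((2 * T).+1 + jj m)).
  rewrite nE -natr1 natrM; exact: ff_odd.
rewrite e0 mul0r mulr0 addr0.
set F := ff _ in e1 *.
rewrite -signr_odd /= oddM /= expr1 mulN1r.
have -> : - (F / - (((2 * T).+1%:R + 2^-1) * hh m)) = F / (((2 * T).+1%:R + 2^-1) * hh m).
  by rewrite invrN mulrN opprK.
apply: lerD => //.
rewrite -[(2 * T).+1%:R]natr1 natrM.
have Tp : 0 <= T%:R :> R by [].
have Dp : 0 < (2 * T%:R + 1 + 2^-1) * hh m :> R by apply: mulr_gt0 => //; lra.
apply: (@le_trans _ _ (hh m / ((2 * T%:R + 1 + 2^-1) * hh m))); last first.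
  by rewrite ler_pM2r ?invr_gt0.
have -> : hh m / ((2 * T%:R + 1 + 2^-1) * hh m) = (2 * T%:R + 1 + 2^-1)^-1 :> R.
  by field; apply/andP; split; rewrite gt_eqF //; lra.
rewrite lef_pV2 ?posrE; lra.
Qed.

Lemma N_lb {R : realType} m :
  \sum_(0 <= t < LL m) (2 * (t%:R + 1))^-1
   - 2 * (2 / (ip m / 4) + (3 / (ip m / 4) + 6 / (ip m / 4) ^+ 2))
  <= berrutN (@ff R) (NN m) (xx m).
Proof.
set g : R := ip m / 4.
have g0 : 0 < g by rewrite /g divr_gt0 ?ip_gt0.
have h0 := hh_gt0 m (R:=R); have hle := hh_le m (R:=R).
have hL := LL_gt0 m; have hP := PP_gt0 m.
have hNN := NN_ge m.
have -> : berrutN (@ff R) (NN m) (xx m) =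
  \sum_(0 <= k < (NN m).+1) (-1)^+k * (ff (node R (NN m) k) / (xx m - node R (NN m) k)).
  by rewrite big_mkord; apply: eq_bigr => k _; rewrite mulrA.
have a_j : (aa m <= jj m)%N by rewrite /aa /jj; lia.
have j_r : (jj m <= rr m)%N by rewrite /rr /jj; lia.
have r_N : (rr m <= (NN m).+1)%N by rewrite /rr; lia.
rewrite (big_cat_nat (n := aa m) (leq0n _) (leq_trans a_j (leq_trans j_r r_N))).
rewrite (big_cat_nat (m := aa m) (n := jj m) a_j (leq_trans j_r r_N)).
rewrite (big_cat_nat (m := jj m) (n := rr m) j_r r_N).
set C := 2 / g + (3 / g + 6 / g ^+ 2).
have HL : `|\sum_(0 <= k < aa m) (-1)^+k * (ff (node R (NN m) k) / (xx m - node R (NN m) k))| <= C.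
  apply: (far m (xx m) g 0 (aa m) g0); first by rewrite add0n; apply: leq_trans a_j (leq_trans j_r r_N).
  move=> i hi; rewrite add0n nodeE /xx /ss.
  have : i%:R * hh m <= (aa m)%:R * hh m :> R by apply: ler_wpM2r; [apply: ltW | rewrite ler_nat ltnW].
  rewrite aaE /g => h1; rewrite ler_normr; apply/orP; left; lra.
have HZ : \sum_(aa m <= k < jj m) (-1)^+k * (ff (node R (NN m) k) / (xx m - node R (NN m) k)) = 0.
  rewrite big_nat_cond big1 // => k /andP[/andP[h1 h2] _].
  suff hE : EE (node R (NN m) k) by rewrite (ff0 _ hE) mul0r mulr0.
  apply: (EE_gap m); rewrite nodeE; apply/andP; split.
    have : (aa m)%:R * hh m <= k%:R * hh m :> R by apply: ler_wpM2r; [apply: ltW | rewrite ler_nat].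
    by rewrite aaE /ss; lra.
  have : (k%:R + 1) * hh m <= (jj m)%:R * hh m :> R.
    by apply: ler_wpM2r; [apply: ltW | rewrite natr1 ler_nat].
  by rewrite jjE /ss; lra.
have HR : \sum_(0 <= t < LL m) (2 * (t%:R + 1))^-1 <=
    \sum_(jj m <= k < rr m) (-1)^+k * (ff (node R (NN m) k) / (xx m - node R (NN m) k)).
  rewrite -{1}[jj m]add0n big_addn (_ : (rr m - jj m = 2 * LL m)%N); last by rewrite /rr /jj; lia.
  exact: region_lb.
have HT : `|\sum_(rr m <= k < (NN m).+1) (-1)^+k * (ff (node R (NN m) k) / (xx m - node R (NN m) k))| <= C.
  rewrite -{1}[rr m]add0n big_addn.
  under eq_bigr => i _ do rewrite rr_even sgn_add -rr_even addnC.
  apply: (far m (xx m) g (rr m) ((NN m).+1 - rr m) g0); first by lia.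
  move=> i hi; rewrite nodeE /xx /ss natrD mulrDl rrE /g.
  have : 0 <= i%:R * hh m :> R by apply: mulr_ge0 => //; apply: ltW.
  move=> h1; rewrite ler_normr; apply/orP; right; lra.
rewrite /= HZ add0r.
move: HL HT; rewrite !ler_norml => /andP[HL1 HL2] /andP[HT1 HT2].
lra.
Qed.

Lemma harm {R : realType} L :
  ln (L%:R + 1 : R) / 2 <= \sum_(0 <= t < L) (2 * (t%:R + 1))^-1.
Proof.
elim: L => [|L IH]; first by rewrite big_geq // add0r ln1 mul0r.
rewrite big_nat_recr //=.
have L0 : 0 < L%:R + 1 :> R by rewrite natr1 ltr0n.
have e : L.+1%:R + 1 = (L%:R + 1) * (1 + (L%:R + 1)^-1) :> R.
  by rewrite -[L.+1%:R]natr1; field; rewrite gt_eqF.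
rewrite e lnM ?posrE //.
have hi : 0 < (L%:R + 1 : R)^-1 by rewrite invr_gt0.
have hl : ln (1 + (L%:R + 1 : R)^-1) <= (L%:R + 1)^-1.
  by apply: le_ln1Dx; apply: lt_trans hi; rewrite ltrN10.
have -> : (2 * (L%:R + 1))^-1 = (L%:R + 1 : R)^-1 / 2 by field; rewrite gt_eqF.
have hl2 : ln (1 + (L%:R + 1 : R)^-1) / 2 <= (L%:R + 1)^-1 / 2.
  by rewrite ler_pM2r.
move: IH hl2; set a := ln (_ + 1); set b := ln (1 + _); set w := (L%:R + 1)^-1.
set S := \sum_(_ <= _ < _) _; set t := 2^-1.
move: a b w S t => a b w S t; lra.
Qed.

Lemma ln2_ge {R : realType} : 1 / 2 <= ln (2 : R).
Proof.
have h2 : (2:R)^-1 < 1 by rewrite invf_lt1 // ltr1n.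
have h : ln (1 + - 2^-1 : R) <= - 2^-1.
  by apply: le_ln1Dx; lra.
have e : 1 + - 2^-1 = (2 : R)^-1 by field.
rewrite e lnV ?posrE // lerN2 in h.
by rewrite mul1r.
Qed.

Lemma ln2_le {R : realType} : ln (2 : R) <= 1.
Proof.
have h : ln (1 + 1 : R) <= 1 by apply: le_ln1Dx; lra.
by move: h; rewrite (_ : 1 + 1 = 2).
Qed.

Lemma ln_pow2 {R : realType} k : ln ((2 ^ k)%N%:R : R) = k%:R * ln 2.
Proof. by rewrite natrX lnXn // mulr_natl. Qed.

Lemma NN_pow m : NN m = (2 ^ (4 + m + CC m))%N.
Proof. rewrite /NN /PP /LL; move: (CC m) => c; by rewrite !expnD. Qed.

Lemma xx_notnode {R : realType} m :
  ~~ [exists k : 'I_(NN m).+1, (xx m : R) == node R (NN m) k].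
Proof.
apply/existsP => -[k /eqP e].
rewrite nodeE /xx /ss in e.
have h0 := hh_gt0 m (R:=R); have hj := jjE m (R:=R).
have e2 : ((2 * (jj m)%:R) - (2 * (k : nat)%:R + 1)) * hh m = 0 :> R.
  move: e hj; move: (hh m) (ip m) ((jj m)%:R) ((k : nat)%:R) => h i a b; lra.
move/eqP: e2; rewrite mulf_eq0 (gt_eqF h0) orbF subr_eq0 => /eqP e3.
have : (2 * jj m)%N = (2 * k + 1)%N.
  by apply/eqP; rewrite -(eqr_nat R) natrD !natrM e3.
lia.
Qed.

Lemma EE_xx {R : realType} m : EE (xx m : R).
Proof.
apply: (EE_gap m); have := hh_gt0 m (R:=R); have := hh_le m (R:=R); rewrite /xx.
have := ip_gt0 m (R:=R); lra.
Qed.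

Lemma key {R : realType} m :
  (1 / 16 : R) <= (NN m)%:R / ln ((NN m)%:R : R) *
     `|berrut (@ff R) (NN m) (xx m) - ff (xx m)|.
Proof.
rewrite /berrut (negbTE (xx_notnode m)) (ff0 _ (EE_xx m)) subr0.
have /andP[D1 D2] := D_bounds m (R:=R).
have hN := N_lb m (R:=R).
set Nv := berrutN _ _ _ in hN *; set Dv := berrutD _ _ in D1 D2 *.
have hP := PP_gt0 m; have hL := LL_gt0 m.
set p : R := (PP m)%:R.
have p1 : 1 <= p by rewrite /p ler1n.
have ipE : ip m = p^-1 :> R by [].
have hC : 2 * (2 / (ip m / 4) + (3 / (ip m / 4) + 6 / (ip m / 4) ^+ 2)) <= (KK m)%:R :> R.
  rewrite ipE /KK natrM natrM -/p.
  have -> : 2 * (2 / (p^-1 / 4) + (3 / (p^-1 / 4) + 6 / (p^-1 / 4) ^+ 2)) = 40 * p + 192 * (p * p) :> R.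
    by field; rewrite gt_eqF // (lt_le_trans _ p1).
  nra.
have hH := harm (R:=R) (LL m).
have lnL : ln ((LL m)%:R : R) <= ln ((LL m)%:R + 1).
  by rewrite ler_ln ?posrE ?ltr0n // ?lerDl // addr_gt0 // ltr0n.
have lnLL : ln ((LL m)%:R : R) = (CC m)%:R * ln 2 by rewrite /LL ln_pow2.
rewrite lnLL in lnL.
have lnN : ln ((NN m)%:R : R) = (4 + m + CC m)%:R * ln 2 by rewrite NN_pow ln_pow2.
have l1 := ln2_ge (R:=R); have l2 := ln2_le (R:=R).
have cE : (CC m)%:R = 8 * ((KK m)%:R + m%:R + 4) :> R.
  by rewrite /CC (natrM R 8 (KK m + m + 4)) (natrD R (KK m + m) 4) (natrD R (KK m) m).
have n0 : 0 < (NN m)%:R :> R by rewrite ltr0n /NN; nia.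
rewrite normrM normfV (ltr0_norm D2).
rewrite (natrD R (4 + m) (CC m)) (natrD R 4 m) in lnN.
move: hH lnL lnN l1 l2 cE hC hN n0 D1 D2.
move: (ln (2 : R)) => l.
move: (ln ((LL m)%:R + 1 : R)) => lL1.
move: (ln ((NN m)%:R : R)) => Ln.
move: ((NN m)%:R : R) => n.
move: ((CC m)%:R : R) => c.
move: ((KK m)%:R : R) (ler0n R (KK m)) => K K0.
move: (m%:R : R) (ler0n R m) => mm m0.
move: (\sum_(_ <= _ < _) _) => S.
move: (2 / (ip m / 4) + (3 / (ip m / 4) + 6 / (ip m / 4) ^+ 2)) => C.
move=> hH lnL lnN l1 l2 cE hC hN n0 D1 D2.
have t1 : 0 <= c * (l - 1/2) by apply: mulr_ge0; lra.
have t2 : 0 <= (4 + mm) * (1 - l) by apply: mulr_ge0; lra.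
have hNv : c * l / 2 - K <= Nv by lra.
have B0 : 0 < c * l / 2 - K by lra.
have hLn : Ln <= 8 * Nv by lra.
have Ln0 : 0 < Ln by rewrite lnN; apply: mulr_gt0; lra.
have a0 : 0 <= Nv by lra.
rewrite ger0_norm //.
have d0 : 0 < - Dv by lra.
have h1 : Nv / (2 * n) <= Nv / - Dv.
  apply: ler_wpM2l => //; rewrite lef_pV2 ?posrE //; lra.
have h2 : n / Ln * (Nv / (2 * n)) = Nv / (2 * Ln).
  by field; apply/andP; split; rewrite gt_eqF.
apply: le_trans (_ : n / Ln * (Nv / (2 * n)) <= _); last first.
  by apply: ler_wpM2l => //; apply: divr_ge0; lra.
rewrite h2 ler_pdivlMr; last lra.
lra.
Qed.

Lemma xx_in {R : realType} m : -1 <= (xx m : R) <= 1.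
Proof.
have := hh_gt0 m (R:=R); have := hh_le m (R:=R); have := ip_gt0 m (R:=R).
have := ip_le1 m (R:=R); rewrite /xx /ss; move: (ip m) (hh m) => a b.
move=> *; apply/andP; split; lra.
Qed.

Lemma NN_ge_m m : (m <= NN m)%N.
Proof.
have := LL_gt0 m; have : (m < PP m)%N by rewrite /PP ltn_expl.
rewrite /NN; nia.
Qed.

Theorem mainTheorem1 (R : realType) :
  exists f : R -> R, lipschitz_on_I f /\
    (0 < limn_esup (fun n : nat =>
           ((n%:R / ln (n%:R : R))%:E * supnorm (fun x => (berrut f n x - f x)%R))%E))%E.
Proof.
exists (@ff R); split.
  by exists 1 => x y _ _; rewrite mul1r; apply: ff_lip.
set u := (fun n : nat => _).
apply: (@lt_le_trans _ _ (1 / 16 : R)%:E); first by rewrite lte_fin; lra.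
rewrite limn_esup_lim; apply: lime_ge; first exact: is_cvg_esups.
near=> N.
apply: (@le_trans _ _ (u (NN N))); last first.
  by apply: ereal_sup_ubound; exists (NN N) => //=; apply: NN_ge_m.
rewrite /u /=.
have hk := key N (R:=R).
have s1 : ((1 / 16 : R)%:E <= ((NN N)%:R / ln ((NN N)%:R : R))%:E * (`|berrut (@ff R) (NN N) (xx N) - ff (xx N)|)%:E)%E.
  by rewrite -EFinM lee_fin.
apply: (le_trans s1).
apply: lee_wpmul2l.
  rewrite lee_fin; apply: divr_ge0 => //; apply: ln_ge0; rewrite ler1n.
  by have := NN_ge_m N; have := LL_gt0 N; have := PP_gt0 N; rewrite /NN; nia.
apply: ereal_sup_ubound; exists (xx N) => //; exact: xx_in.
Unshelve. all: by end_near.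
Qed.
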